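(* Let $K$ be a finite field of characteristic $p$ and order $q$, let $s$ be a positive integer with $\gcd(s,q-1)=1$, and let $\tau$ be the permutation of $\mathcal{W}_{K,s}$ defined below. If $|\mathcal{W}_{K,s}|=4$, then $\tau$ does not permute $\mathcal{W}_{K,s}$ as a $4$-cycle.
   Context: $\zeta=\exp(2\pi i/p)$, $\psi(x)=\zeta^{\mathrm{Tr}(x)}$ with $\mathrm{Tr}$ the absolute trace of $K$ to $\mathbb{F}_p$; $W_u=\sum_{x\in K}\psi(x^s-ux)$; $\mathcal{W}_{K,s}=\{W_u:u\in K^\times\}$. Let $\gamma$ be a primitive element of $\mathbb{F}_p$ and $\sigma\in\mathrm{Gal}(\mathbb{Q}(\zeta)/\mathbb{Q})$ with $\sigma(\zeta)=\zeta^\gamma$; it is known that $\sigma(W_u)=W_{\gamma^{1-1/s}u}$ (with $1/s$ the inverse of $s$ mod $p-1$), so $\sigma$ restricts to a permutation $\tau$ of $\mathcal{W}_{K,s}$. *)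

(* Defs.v *)
From HB Require Import structures.
From mathcomp Require Import all_boot all_order all_algebra all_field.
Set Implicit Arguments. Unset Strict Implicit. Unset Printing Implicit Defensive.
Import GRing.Theory Num.Theory.
Local Open Scope ring_scope.

Section Weil.
Variables (K : finFieldType) (p : nat).

(* zeta = exp(2 pi i / p) : (p.-root (-1)) = exp(i pi / p) (minimal argument) *)
Definition zetaC : algC := (p.-root (-1)) ^+ 2.

(* absolute trace K -> F_p, with [K : F_p] = logn p #|K| *)
Definition abs_trace (x : K) : K := \sum_(i < logn p #|K|) x ^+ (p ^ i).

Definition trace_nat (x : K) : nat :=
  odflt 0%N (omap (@nat_of_ord p) [pick k : 'I_p | (k%:R : K) == abs_trace x]).

Definition psiC (x : K) : algC := zetaC ^+ trace_nat x.

Definition Wsum (s : nat) (u : K) : algC := \sum_(x : K) psiC (x ^+ s - u * x).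

Definition Wset (s : nat) : seq algC :=
  undup [seq Wsum s u | u <- enum K & u != 0].
End Weil.

(* f permutes the 4-element list S as a 4-cycle: some orbit has 4 distinct elements *)
Definition is_4cycle (f : algC -> algC) (S : seq algC) : Prop :=
  exists2 w, w \in S & uniq [:: w; f w; f (f w); f (f (f w))].

(* Main.v *)
Require Import Defs.
From HB Require Import structures.
From mathcomp Require Import all_boot all_order all_algebra all_field.
From Stdlib Require Import Lia.
From mathcomp Require Import zify.
Import GRing.Theory Num.Theory.
Local Open Scope ring_scope.
Set Implicit Arguments. Unset Strict Implicit.

Section Main.
Variables (K : finFieldType) (p : nat).
Hypothesis pchK : p \in [pchar K].

Let pr_p : prime p := pcharf_prime pchK.
Let p_gt1 : (1 < p)%N := prime_gt1 pr_p.
Let p_gt0 : (0 < p)%N := prime_gt0 pr_p.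

Lemma cardK : #|K| = (p ^ logn p #|K|)%N.
Proof. exact: (card_pprimeChar pchK). Qed.

Lemma logK_gt0 : (0 < logn p #|K|)%N.
Proof.
have := finNzRing_gt1 K; rewrite {1}cardK.
by case: (logn p #|K|) => //; rewrite expn0.
Qed.

Lemma pnat_pow i : [pchar K].-nat (p ^ i)%N.
Proof. by rewrite (eq_pnat _ (pcharf_eq pchK)) pnatX pnat_id. Qed.

Lemma frobD i (x y : K) : (x + y) ^+ (p ^ i) = x ^+ (p ^ i) + y ^+ (p ^ i).
Proof. exact: exprDn_pchar (pnat_pow i). Qed.

Lemma frob_nat i k : (k%:R : K) ^+ (p ^ i) = k%:R.
Proof.
elim: k => [|k IH]; first by rewrite expr0n expn_eq0 eqn0Ngt p_gt0.
by rewrite -addn1 natrD frobD IH expr1n.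
Qed.

Lemma natK_eq k j : ((k%:R : K) == j%:R) = (k == j %[mod p]).
Proof.
wlog le_kj : k j / (k <= j)%N.
  by move=> W; case: (leqP k j) => [/W//|/ltnW/W]; rewrite eq_sym => ->; rewrite eq_sym.
rewrite eq_sym -subr_eq0 -natrB // -(dvdn_pcharf pchK) eq_sym eqn_mod_dvd //.
Qed.

Lemma Fp_elem (y : K) : y ^+ p = y -> exists k : 'I_p, (k%:R : K) = y.
Proof.
move=> yp; case: (pickP (fun k : 'I_p => (k%:R : K) == y)) => [k /eqP|Hn]; first by exists k.
exfalso.
pose P : {poly K} := 'X^p - 'X.
have sP : size P = p.+1.
  by rewrite /P size_polyDl ?size_polyXn // size_polyN size_polyX ltnS.
pose rs := y :: [seq (k%:R : K) | k <- iota 0 p].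
have : (size rs < size P)%N.
  apply: max_poly_roots.
  - by rewrite -size_poly_eq0 sP.
  - apply/allP => z; rewrite inE => /predU1P[->|/mapP[k _ ->]];
      rewrite /root /P !hornerE ?yp ?subrr //.
    by rewrite -[p]expn1 frob_nat subrr.
  - rewrite /= map_inj_in_uniq ?iota_uniq ?andbT.
      apply/mapP => -[k]; rewrite mem_iota add0n => kp yk.
      by have := Hn (Ordinal kp); rewrite /= -yk eqxx.
    move=> a b; rewrite !mem_iota !add0n => ap bp /eqP.
    by rewrite natK_eq !modn_small // => /eqP.
by rewrite sP /= size_map size_iota ltnn.
Qed.

Definition Tr (x : K) := abs_trace p x.

Lemma TrD x y : Tr (x + y) = Tr x + Tr y.
Proof. by rewrite /Tr /abs_trace -big_split /=; apply: eq_bigr => i _; rewrite frobD. Qed.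

Lemma Tr_natM k x : Tr (k%:R * x) = k%:R * Tr x.
Proof. by rewrite /Tr /abs_trace mulr_sumr; apply: eq_bigr => i _; rewrite exprMn frob_nat. Qed.

Lemma Tr0 : Tr 0 = 0.
Proof. by rewrite /Tr /abs_trace big1 // => i _; rewrite expr0n expn_eq0 eqn0Ngt p_gt0. Qed.

Lemma Tr_p x : Tr x ^+ p = Tr x.
Proof.
rewrite /Tr /abs_trace.
have -> : (\sum_(i < logn p #|K|) x ^+ (p ^ i)) ^+ p =
          \sum_(i < logn p #|K|) x ^+ (p ^ i.+1).
  rewrite -(pFrobenius_autE pchK (\sum_(i < logn p #|K|) x ^+ (p ^ i))) rmorph_sum; apply: eq_bigr => i _.
  by rewrite /= pFrobenius_autE -exprM expnS mulnC.
have := logK_gt0; case E: (logn p #|K|) => [//|m] _.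
rewrite big_ord_recr big_ord_recl /= expn0 expr1 addrC; congr (_ + _).
  by rewrite -E -cardK expf_card.
Qed.

Lemma Tr_nontriv : exists a, Tr a != 0.
Proof.
apply/existsP; apply: contraT => /existsPn /= H.
set n := logn p #|K|.
pose T : {poly K} := \sum_(i < n) 'X^(p ^ i).
have Troot : forall x, root T x.
  move=> x; rewrite /root /T horner_sum.
  under eq_bigr do rewrite hornerXn.
  by have := H x; rewrite negbK.
have T1 : T`_1 = 1.
  have [m Em] : exists m, n = m.+1 by exists n.-1; rewrite prednK // logK_gt0.
  rewrite /T coef_sum Em.
  rewrite big_ord_recl /= expn0 coefXn eqxx big1 ?addr0 // => i _.
  by rewrite coefXn -[1%N](expn0 p) eqn_exp2l.
have Tn0 : T != 0 by apply: contra_eq_neq T1 => ->; rewrite coef0 eq_sym oner_neq0.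
have : (size (enum K) < size T)%N.
  by apply: max_poly_roots => //; [apply/allP => x _; apply: Troot | exact: enum_uniq].
rewrite -cardE cardK -/n.
have : (size T <= (p ^ n.-1).+1)%N.
  apply: leq_trans (size_sum _ _ _) _; apply/bigmax_leqP => i _.
  by rewrite size_polyXn ltnS leq_pexp2l // -ltnS prednK ?logK_gt0.
move=> h1 h2; have := leq_trans h2 h1; rewrite ltnS leqNgt.
by rewrite ltn_exp2l // ltn_predL (logK_gt0 : (0 < n)%N).
Qed.


Local Notation zeta := (zetaC p).
Local Notation psi := (@psiC K p).

Lemma zeta_prim : p.-primitive_root zeta.
Proof.
pose r : algC := p.-root (-1).
have rp : r ^+ p = -1 by rewrite /r rootCK.
have zp : zeta ^+ p = 1 by rewrite /zetaC -/r exprAC rp sqrrN expr1n.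
have [m pm mp] := prim_order_exists p_gt0 zp.
case/primeP: pr_p => _ /(_ m mp) /pred2P [m1|mP]; last by move: pm; rewrite mP.
have : zeta ^+ 1 = 1 by move: pm; rewrite m1 => /prim_expr_order.
rewrite expr1 /zetaC -/r => /eqP; rewrite sqrf_eq1 => /orP [/eqP r1|/eqP rN1].
  by move: rp; rewrite r1 expr1n => /eqP; rewrite -subr_eq0 opprK paddr_eq0 ?ler01 // oner_eq0.
by have := @rootC_lt0 algC p (-1) p_gt1; rewrite -/r rN1 ltrN10.
Qed.

Lemma trace_natE x : (trace_nat p x)%:R = Tr x.
Proof.
rewrite /trace_nat; case: pickP => [k /eqP -> //| H]; exfalso.
by have [k hk] := Fp_elem (Tr_p x); have := H k; rewrite /= hk eqxx.
Qed.

Lemma psi_spec x m : (m%:R : K) = Tr x -> psi x = zeta ^+ m.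
Proof.
move=> H; rewrite /psiC; apply/eqP.
by rewrite (eq_prim_root_expr zeta_prim) -natK_eq trace_natE H.
Qed.

Lemma psi0 : psi 0 = 1.
Proof. by rewrite (@psi_spec 0 0) ?Tr0. Qed.

Lemma psiD x y : psi (x + y) = psi x * psi y.
Proof.
rewrite (@psi_spec _ (trace_nat p x + trace_nat p y)) ?exprD //.
by rewrite natrD !trace_natE TrD.
Qed.

Lemma psi_natM k x : psi (k%:R * x) = zeta ^+ (k * trace_nat p x).
Proof. by rewrite (@psi_spec _ (k * trace_nat p x)) // natrM trace_natE Tr_natM. Qed.

Lemma psi_ne1 : exists a, psi a != 1.
Proof.
have [a Ta] := Tr_nontriv; exists a.
rewrite /psiC -(expr0 zeta) (eq_prim_root_expr zeta_prim) -natK_eq trace_natE.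
by [].
Qed.

Lemma psi_Aint x : psi x \in Aint.
Proof.
apply: rpredX; apply: (Aint_unity_root p_gt0).
by rewrite unity_rootE (prim_expr_order zeta_prim).
Qed.

Lemma S0 : \sum_(y : K) psi y = 0.
Proof.
have [a Ha] := psi_ne1.
have E : \sum_(y : K) psi y = psi a * \sum_(y : K) psi y.
  rewrite {1}(reindex_inj (addIr a)) mulr_sumr /=.
  by apply: eq_bigr => y _; rewrite psiD mulrC.
apply/eqP; move/eqP: E; rewrite -{1}[\sum_y _]mul1r -subr_eq0 -mulrBl mulf_eq0.
by rewrite subr_eq0 eq_sym (negPf Ha).
Qed.


Variable s : nat.
Hypothesis s_gt0 : (0 < s)%N.
Hypothesis cop : coprime s (#|K| - 1).

Lemma unitK_exp (z : K) : z != 0 -> z ^+ (#|K| - 1) = 1.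
Proof.
move=> z0; apply: (mulIf z0); rewrite mul1r -exprSr subn1 prednK ?expf_card //.
exact: ltnW (finNzRing_gt1 K).
Qed.

Lemma pow_inj : injective (fun x : K => x ^+ s).
Proof.
move=> x y /= E.
have [x0|x0] := eqVneq x 0.
  by move: E; rewrite x0 expr0n eqn0Ngt s_gt0 /= => /esym/eqP; rewrite expf_eq0 => /andP[_ /eqP].
have y0 : y != 0 by apply: contraNneq x0 => y0; move: E; rewrite y0 expr0n eqn0Ngt s_gt0 /= => /eqP; rewrite expf_eq0 => /andP[].
pose z := x / y.
have zs : z ^+ s = 1 by rewrite /z exprMn exprVn E divff // expf_neq0.
have z0 : z != 0 by rewrite /z mulf_neq0 ?invr_eq0.
have q1 : (0 < #|K| - 1)%N by rewrite subn_gt0 finNzRing_gt1.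
have [m pm mdv] := prim_order_exists q1 (unitK_exp z0).
have : (m %| s)%N by rewrite (prim_order_dvd pm) zs.
move=> ms; have : (m %| gcdn s (#|K| - 1))%N by rewrite dvdn_gcd ms mdv.
rewrite (eqP cop) dvdn1 => /eqP m1.
have : z ^+ 1 = 1 by move: pm; rewrite m1 => /prim_expr_order.
rewrite expr1 /z => /(congr1 (fun t => t * y)).
by rewrite mulfVK // mul1r.
Qed.

Local Notation W := (@Wsum K p s).

Lemma sum_pow (F : K -> algC) : \sum_(x : K) F (x ^+ s) = \sum_(x : K) F x.
Proof. by rewrite [RHS](reindex_inj pow_inj). Qed.

Lemma W0 : W 0 = 0.
Proof.
rewrite /Wsum; under eq_bigr do rewrite mul0r subr0.
by rewrite (sum_pow psi) S0.
Qed.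

Lemma sumW : \sum_(u : K) W u = #|K|%:R.
Proof.
rewrite /Wsum exchange_big /=.
rewrite (bigD1 0) //= [X in _ + X]big1 ?addr0.
  rewrite expr0n eqn0Ngt s_gt0 /=.
  under eq_bigr do rewrite mulr0 subr0 psi0.
  by rewrite sumr_const.
move=> x x0.
under eq_bigr do rewrite psiD.
rewrite -mulr_sumr; apply/eqP; rewrite mulf_eq0; apply/orP; right.
have -> : \sum_(j : K) psi (-(j * x)) = \sum_(y : K) psi y.
  by rewrite [RHS](reindex_inj (inj_comp (@oppr_inj K) (mulIf x0))).
by rewrite S0.
Qed.

Lemma sumW_nz : \sum_(u | u != 0) W u = #|K|%:R.
Proof. by rewrite -sumW [RHS](bigD1 0) //= W0 add0r. Qed.

Lemma W_Aint u : W u \in Aint.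
Proof. by apply: rpred_sum => x _; apply: psi_Aint. Qed.

Variables (gamma : nat) (sigma : {rmorphism algC -> algC}).
Hypothesis sig_zeta : sigma zeta = zeta ^+ gamma.
Hypothesis gam0 : (gamma%:R : K) != 0.

Lemma sigma_psi x : sigma (psi x) = psi (gamma%:R * x).
Proof. by rewrite psi_natM /psiC rmorphXn sig_zeta -exprM. Qed.

Lemma sigma_W : exists c : K, [/\ c != 0, c ^+ s * gamma%:R = gamma%:R ^+ s & forall u, sigma (W u) = W (c * u)].
Proof.
have [g gK Kg] := injF_bij pow_inj.
pose l := g (gamma%:R^-1).
have ls : l ^+ s = gamma%:R^-1 by rewrite /l Kg.
have l0 : l != 0.
  apply/eqP => l0; move: ls; rewrite l0 expr0n eqn0Ngt s_gt0 /= => /esym/eqP.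
  by rewrite invr_eq0 (negPf gam0).
exists (gamma%:R * l); split; first by rewrite mulf_neq0.
  by rewrite exprMn ls divfK.
move=> u; rewrite /Wsum rmorph_sum /=.
rewrite (reindex_inj (mulfI l0)) /=.
apply: eq_bigr => x _; rewrite sigma_psi; congr psi.
rewrite mulrBr exprMn ls mulrA divff // mul1r.
by rewrite !mulrA [gamma%:R * u * l]mulrAC.
Qed.


Local Notation S := (Wset K p s).

Definition Nw (w : algC) : nat := \sum_(u : K | (u != 0) && (W u == w)) 1%N.

Lemma memS w : reflect (exists2 u, u != 0 & w = W u) (w \in S).
Proof.
rewrite /Wset mem_undup; apply: (iffP mapP) => [[u]|[u u0 ->]].
  by rewrite mem_filter mem_enum andbT => u0 ->; exists u.
by exists u; rewrite // mem_filter mem_enum andbT.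
Qed.

Lemma sum_over_S (f : algC -> algC) :
  \sum_(w <- S) (Nw w)%:R * f w = \sum_(u | u != 0) f (W u).
Proof.
have E : forall u, u != 0 -> f (W u) = \sum_(w <- S) (W u == w)%:R * f w.
  move=> u u0; rewrite (bigD1_seq (W u)) ?undup_uniq //; last by apply/memS; exists u.
  rewrite /= eqxx mul1r big1 ?addr0 // => v; rewrite eq_sym => /negPf ->.
  by rewrite mul0r.
rewrite [RHS](eq_bigr _ E) exchange_big /=.
apply: eq_bigr => w _; rewrite -mulr_suml /Nw natr_sum big_mkcondr /=.
by congr (_ * _); apply: eq_bigr => u _; case: eqP.
Qed.

Lemma Nw_sigma (c : K) : c != 0 -> (forall u, sigma (W u) = W (c * u)) ->
  forall w, Nw (sigma w) = Nw w.
Proof.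
move=> c0 hc w; rewrite /Nw (reindex_inj (mulfI c0)); apply: eq_bigl => u /=.
by rewrite mulf_eq0 (negPf c0) /= -hc (inj_eq (fmorph_inj sigma)).
Qed.

Lemma main_contra : size S = 4%N -> ~ is_4cycle sigma S.
Proof.
move=> sz [w wS U].
have [c [c0 cs hc]] := sigma_W.
have sigS v : v \in S -> sigma v \in S.
  by case/memS => u u0 ->; apply/memS; exists (c * u); rewrite ?mulf_neq0 ?hc.
pose L := [:: w; sigma w; sigma (sigma w); sigma (sigma (sigma w))].
have LS : {subset L <= S}.
  by move=> v; rewrite !inE => /or4P[] /eqP ->; rewrite ?sigS.
have szL : (size S <= size L)%N by rewrite sz.
have [_ eqLS] := uniq_min_size U LS szL.
have pLS : perm_eq L S := uniq_perm U (undup_uniq _) eqLS.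
have NS := Nw_sigma c0 hc.
have E1 := sum_over_S (fun _ => 1).
rewrite -(perm_big _ pLS) /= !big_cons big_nil !NS !mulr1 addr0 in E1.
rewrite sumr_const cardC1 in E1.
set N := Nw w in E1.
have H4 : (4 * N)%N = #|K|.-1.
  apply/eqP; rewrite -(eqr_nat algC) -E1 -!natrD; apply/eqP; congr _%:R; lia.
have E2 := sum_over_S id.
rewrite -(perm_big _ pLS) /= !big_cons big_nil !NS addr0 sumW_nz -/N in E2.
pose T := w + (sigma w + (sigma (sigma w) + sigma (sigma (sigma w)))).
have ET : N%:R * T = #|K|%:R by rewrite -E2 /T !mulrDr.
have SA v : v \in S -> v \in Aint by case/memS => u _ ->; apply: W_Aint.
have TA : T \in Aint by rewrite /T !rpredD ?SA ?LS // !inE eqxx ?orbT.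
have N0 : (0 < N)%N.
  by rewrite lt0n; apply/eqP => N0; move: H4; rewrite N0 /= => /esym/eqP; rewrite -subn1 subn_eq0 leqNgt finNzRing_gt1.
have N0' : (N%:R : algC) != 0 by rewrite pnatr_eq0 -lt0n.
have TQ : T = #|K|%:R / N%:R by rewrite -ET mulrAC divff // mul1r.
have Tint : T \in Num.int by apply: Cint_rat_Aint => //; rewrite TQ rpred_div ?rpred_nat.
have Tnat : T \in Num.nat by rewrite natrEint Tint TQ divr_ge0 ?ler0n.
case/natrP: Tnat => m Tm.
have Hm : (N * m)%N = #|K| by apply/eqP; rewrite -(eqr_nat algC) natrM -Tm ET.
have N1 : N = 1%N.
  apply/eqP; rewrite -dvdn1.
  have : (N %| #|K|)%N by rewrite -Hm dvdn_mulr.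
  have -> : #|K| = (4 * N + 1)%N by have := finNzRing_gt1 K; lia.
  by rewrite dvdn_addr // dvdn_mull.
have q5 : #|K| = 5%N by have := finNzRing_gt1 K; lia.
have ord4 z : z != 0 -> z ^+ 4 = 1 :> K by move=> z0; have := unitK_exp z0; rewrite q5.
have odds : odd s.
  rewrite -coprimen2; apply: (coprime_dvdr (_ : 2 %| 4)%N) => //.
  by move: cop; rewrite q5.
have s2 : (2 * s = 4 * s./2 + 2)%N by have := odd_double_half s; rewrite odds -muln2; lia.
have P2 z : z != 0 -> z ^+ (2 * s) = z ^+ 2 :> K.
  by move=> z0; rewrite s2 exprD exprM ord4 // expr1n mul1r.
have c2 : c ^+ 2 = 1.
  have := congr1 (fun t => t ^+ 2) cs; rewrite /= exprMn -!exprM !(mulnC s) !P2 //.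
  by rewrite -{2}[gamma%:R ^+ 2]mul1r => /(mulIf (expf_neq0 2 gam0)).
case/memS: wS U => u0 u00 ->.
rewrite !hc !mulrA -expr2 c2 mul1r /= !inE eqxx !orbT /=.
by [].
Qed.

End Main.

Unset Implicit Arguments.
Set Strict Implicit.

Theorem proposition6p2 (K : finFieldType) (p : nat) (s : nat) (gamma : nat)
    (sigma : {rmorphism algC -> algC}) :
  p \in [pchar K] ->
  (0 < s)%N -> coprime s (#|K| - 1) ->
  (p.-1).-primitive_root (gamma%:R : 'F_p) ->
  sigma (zetaC p) = (zetaC p) ^+ gamma ->
  size (Wset K p s) = 4%N ->
  ~ is_4cycle sigma (Wset K p s).
Proof.
move=> pchK s_gt0 cop gprim sigz sz.
have pr_p := pcharf_prime pchK.
have g0 : (gamma%:R : K) != 0.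
  rewrite -(dvdn_pcharf pchK) (dvdn_pcharf (pchar_Fp pr_p)).
  apply/eqP => g0; have := prim_expr_order gprim; rewrite g0 expr0n.
  have -> : (p.-1 == 0%N) = false by rewrite -subn1 subn_eq0 leqNgt prime_gt1.
  by move/eqP; rewrite eq_sym oner_eq0.
exact: (@main_contra K p pchK s s_gt0 cop gamma sigma sigz g0 sz).
Qed.
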